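(* $(\mathcal{N},\sim^\omega_V)\models\forall\mathsf{x}\,\neg\forall\mathsf{y}[\neg\neg(\mathsf{x}=\mathsf{y})\rightarrow\mathsf{x}=\mathsf{y}]$; that is, for every $\gamma\in\mathcal{N}$ it is not the case that $\forall\alpha[\neg\neg(\alpha\sim^\omega_V\gamma)\rightarrow\alpha\sim^\omega_V\gamma]$.
   Context: Intuitionistic mathematics (constructive reading of logical constants; Markov's Principle not assumed), with Brouwer's Continuity Principle as an axiom (for every $R\subseteq\mathcal{N}\times\omega$, if $\forall\alpha\exists n[\alpha Rn]$ then $\forall\alpha\exists m\exists n\forall\beta[\overline{\alpha}m\sqsubset\beta\rightarrow\beta Rn]$, where $\overline{\alpha}m=\langle\alpha(0),\dots,\alpha(m-1)\rangle$ and $\sqsubset$ is ''initial segment of''). $\mathcal{N}=\omega^\omega$. Relations: $\alpha\sim^0_V\beta$ iff $\exists n\forall m>n[\alpha(m)=\beta(m)]$; $\alpha\sim^{i+1}_V\beta$ iff $\exists n\forall m>n[\alpha(m)\neq\beta(m)\rightarrow\alpha\sim^i_V\beta]$; $\alpha\sim^\omega_V\beta$ iff $\exists i[\alpha\sim^i_V\beta]$. In $(\mathcal{N},\sim^\omega_V)$ the symbol $=$ is interpreted by $\sim^\omega_V$; satisfaction read intuitionistically. *)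

(* Defs.v *)
Definition Baire := nat -> nat.

Definition prefix_of (alpha : Baire) (m : nat) (beta : Baire) : Prop :=
  forall k, k < m -> beta k = alpha k.

Definition BCP : Prop :=
  forall R : Baire -> nat -> Prop,
    (forall alpha, exists n, R alpha n) ->
    forall alpha, exists m, exists n,
      forall beta, prefix_of alpha m beta -> R beta n.

Fixpoint simV (i : nat) (alpha beta : Baire) : Prop :=
  match i with
  | 0 => exists n, forall m, m > n -> alpha m = beta m
  | S j => exists n, forall m, m > n -> alpha m <> beta m -> simV j alpha beta
  end.

Definition simVw (alpha beta : Baire) : Prop := exists i, simV i alpha beta.

(* Main.v *)
Require Import Defs.
From Stdlib Require Import Arith Lia Bool.

Fixpoint allb (P : nat -> bool) (m : nat) : bool :=
  match m with 0 => true | S m' => allb P m' && P m' end.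

Lemma allb_spec P m : allb P m = true -> forall k, k < m -> P k = true.
Proof.
  induction m; simpl; intros H k Hk; [lia|].
  apply andb_prop in H as [H1 H2].
  destruct (Nat.eq_dec k m); [subst; auto| apply IHm; auto; lia].
Qed.

Lemma allb_intro P m : (forall k, k < m -> P k = true) -> allb P m = true.
Proof.
  induction m; simpl; intros H; auto.
  rewrite IHm; [apply H; lia|]. intros; apply H; lia.
Qed.

Definition recb (a : Baire) (m : nat) : bool :=
  negb (Nat.eqb (a m) 0) && allb (fun k => Nat.eqb (a k) 0 || Nat.ltb (a m) (a k)) m.

Lemma recb_spec a m : recb a m = true -> a m <> 0 /\ forall k, k < m -> a k = 0 \/ a m < a k.
Proof.
  unfold recb; intro H; apply andb_prop in H as [H1 H2].
  split.
  - intro E; rewrite E in H1; discriminate.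
  - intros k Hk. pose proof (allb_spec _ _ H2 k Hk) as H.
    apply orb_prop in H as [H|H]; [left; apply Nat.eqb_eq; auto | right; apply Nat.ltb_lt; auto].
Qed.

Lemma recb_intro a m : a m <> 0 -> (forall k, k < m -> a k = 0 \/ a m < a k) -> recb a m = true.
Proof.
  intros H1 H2; unfold recb. apply andb_true_intro; split.
  - destruct (Nat.eqb_spec (a m) 0); [contradiction|reflexivity].
  - apply allb_intro; intros k Hk. destruct (H2 k Hk) as [E|E].
    + rewrite E; reflexivity.
    + apply orb_true_intro; right; apply Nat.ltb_lt; auto.
Qed.

Definition bt (g a : Baire) : Baire := fun m => if recb a m then S (g m) else g m.

Lemma bt_ne g a m : recb a m = true -> bt g a m <> g m.
Proof. unfold bt; intros H; rewrite H; lia. Qed.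

Lemma bt_eq g a m : bt g a m <> g m -> recb a m = true.
Proof. unfold bt; destruct (recb a m); auto. Qed.

Lemma Lbound g : forall v q a, (forall m, q < m -> recb a m = true -> a m < v) -> simV v (bt g a) g.
Proof.
  induction v; intros q a H; simpl.
  - exists q; intros m Hm. unfold bt. destruct (recb a m) eqn:E; auto.
    specialize (H m Hm E); lia.
  - exists q; intros m Hm Hne. apply bt_eq in Hne.
    pose proof (H m Hm Hne) as Hv. destruct (recb_spec _ _ Hne) as [Hz _].
    apply (IHv m). intros m' Hm' Hr. destruct (recb_spec _ _ Hr) as [_ Hk].
    destruct (Hk m Hm'); lia.
Qed.

Lemma nn g a : ~ ~ simVw (bt g a) g.
Proof.
  intro N.
  assert (Z : forall k, a k = 0).
  { intro k; destruct (Nat.eq_dec (a k) 0) as [e|e]; auto; exfalso; apply N.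
    exists (a k); apply (Lbound g _ k); intros m Hm Hr.
    destruct (recb_spec _ _ Hr) as [_ Hk]. destruct (Hk k Hm); lia. }
  apply N; exists 0; apply (Lbound g 0 0); intros m _ Hr.
  destruct (recb_spec _ _ Hr) as [Hz _]; rewrite Z in Hz; lia.
Qed.

Lemma prefix_dec p L a : prefix_of p L a \/ ~ prefix_of p L a.
Proof.
  induction L.
  - left; intros k Hk; lia.
  - destruct IHL as [H|H].
    + destruct (Nat.eq_dec (a L) (p L)).
      * left; intros k Hk; destruct (Nat.eq_dec k L); [subst; auto|apply H; lia].
      * right; intro H'; apply n, H'; lia.
    + right; intro H'; apply H; intros k Hk; apply H'; lia.
Qed.

Definition pad (p : Baire) (L : nat) : Baire := fun k => if k <? L then p k else 0.

Definition ext (z : Baire) (M v : nat) : Baire :=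
  fun k => if k <? M then z k else if k =? M then v else 0.

Lemma C (bcp : BCP) g : forall j p L, (forall k, k < L -> p k = 0 \/ S j < p k) ->
  ~ (forall a, prefix_of p L a -> simV j (bt g a) g).
Proof.
  induction j; intros p L Hc A.
  - set (R := fun a N => prefix_of p L a -> forall m, N < m -> bt g a m = g m).
    assert (T : forall a, exists N, R a N).
    { intro a; destruct (prefix_dec p L a) as [H|H].
      - destruct (A a H) as [N HN]; exists N; intros _; exact HN.
      - exists 0; intro H'; contradiction. }
    destruct (bcp R T (pad p L)) as [m' [N HN]].
    set (M := L + m' + N + 1).
    set (a' := ext (pad p L) M 1).
    assert (Hp : prefix_of (pad p L) m' a').
    { intros k Hk; unfold a', ext. replace (k <? M) with true by (symmetry; apply Nat.ltb_lt; lia); auto. }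
    assert (Hq : prefix_of p L a').
    { intros k Hk; unfold a', ext, pad.
      replace (k <? M) with true by (symmetry; apply Nat.ltb_lt; lia).
      replace (k <? L) with true by (symmetry; apply Nat.ltb_lt; lia); auto. }
    assert (Hr : recb a' M = true).
    { apply recb_intro; unfold a', ext.
      - rewrite Nat.ltb_irrefl, Nat.eqb_refl; lia.
      - intros k Hk. rewrite Nat.ltb_irrefl, Nat.eqb_refl.
        replace (k <? M) with true by (symmetry; apply Nat.ltb_lt; lia).
        unfold pad; destruct (k <? L) eqn:E; auto.
        apply Nat.ltb_lt in E; destruct (Hc k E); auto. }
    apply (bt_ne g _ _ Hr). apply (HN a' Hp Hq). lia.
  - set (R := fun a N => prefix_of p L a -> forall m, N < m -> bt g a m <> g m -> simV j (bt g a) g).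
    assert (T : forall a, exists N, R a N).
    { intro a; destruct (prefix_dec p L a) as [H|H].
      - destruct (A a H) as [N HN]; exists N; intros _; exact HN.
      - exists 0; intro H'; contradiction. }
    destruct (bcp R T (pad p L)) as [m' [N HN]].
    set (M := L + m' + N + 1).
    set (a' := ext (pad p L) M (S (S j))).
    apply (IHj a' (S M)).
    + intros k Hk. unfold a', ext. destruct (k <? M) eqn:E.
      * apply Nat.ltb_lt in E. unfold pad; destruct (k <? L) eqn:E2; auto.
        apply Nat.ltb_lt in E2; destruct (Hc k E2); auto; right; lia.
      * destruct (k =? M); [right; lia| auto].
    + intros a Ha.
      assert (Hp : prefix_of (pad p L) m' a).
      { intros k Hk. rewrite (Ha k ltac:(lia)); unfold a', ext.
        replace (k <? M) with true by (symmetry; apply Nat.ltb_lt; lia); auto. }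
      assert (Hq : prefix_of p L a).
      { intros k Hk. rewrite (Ha k ltac:(lia)); unfold a', ext, pad.
        replace (k <? M) with true by (symmetry; apply Nat.ltb_lt; lia).
        replace (k <? L) with true by (symmetry; apply Nat.ltb_lt; lia); auto. }
      assert (Hr : recb a M = true).
      { apply recb_intro; rewrite (Ha M ltac:(lia)); unfold a', ext;
          rewrite Nat.ltb_irrefl, Nat.eqb_refl.
        - lia.
        - intros k Hk. rewrite (Ha k ltac:(lia)); unfold a', ext.
          replace (k <? M) with true by (symmetry; apply Nat.ltb_lt; lia).
          unfold pad; destruct (k <? L) eqn:E; auto.
          apply Nat.ltb_lt in E; destruct (Hc k E); auto; right; lia. }
      apply (HN a Hp Hq M ltac:(lia)). apply bt_ne; auto.
Qed.

Theorem theorem10p3 :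
  BCP ->
  forall gamma : Baire,
    ~ (forall alpha : Baire, ~ ~ simVw alpha gamma -> simVw alpha gamma).
Proof.
  intros bcp g H.
  set (R := fun a n => simV n (bt g a) g).
  assert (T : forall a, exists n, R a n) by (intro a; exact (H _ (nn g a))).
  destruct (bcp R T (fun _ => 0)) as [m [n Hn]].
  apply (C bcp g n (fun _ => 0) m); [intros; auto|].
  intros a Ha; exact (Hn a Ha).
Qed.
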